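(* Let $\mathcal{F}=\mathcal{B}(K_3)$. For every odd integer $n\ge 3$ with $n\ne 5$, $f(n,\mathcal{F})=2^{n-2}$.
   Context: For a graph $G$, a hypergraph $H$ is a Berge-$G$ hypergraph if there are an injective map $\phi:V(G)\to V(H)$ and pairwise distinct hyperedges $e_{xy}\in E(H)$, one for each $xy\in E(G)$, with $\phi(x),\phi(y)\in e_{xy}$. $\mathcal{B}(G)$ denotes the family of all Berge-$G$ hypergraphs. For a positive integer $n$ and a graph $G$, $f(n,\mathcal{B}(G))$ is the smallest number of colors in a coloring of all subsets of $[n]=\{1,\dots,n\}$ (i.e. of $2^{[n]}$) such that there is no monochromatic Berge-$G$ hypergraph, i.e. no color class, viewed as a (non-uniform) hypergraph on $[n]$, contains a Berge-$G$ subhypergraph. *)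

(* Defs.v *)
From mathcomp Require Import all_boot.
Set Implicit Arguments. Unset Strict Implicit. Unset Printing Implicit Defensive.

(* A (non-uniform) hypergraph on vertex type T is a predicate on {set T}
   (its set of hyperedges). *)

(* Graph G: vertex finType V, edge relation adj (intended symmetric and
   irreflexive); edges are the unordered pairs {x,y} with adj x y. *)
Definition graph_edge (V : finType) (adj : rel V) (p : {set V}) : bool :=
  [exists x, exists y, adj x y && (p == [set x; y])].

Definition contains_berge (V T : finType) (adj : rel V) (H : pred {set T}) : Prop :=
  exists (phi : V -> T) (e : {set V} -> {set T}),
    injective phi /\
    (forall p q, graph_edge adj p -> graph_edge adj q -> e p = e q -> p = q) /\
    (forall x y, adj x y ->
       H (e [set x; y]) /\ phi x \in e [set x; y] /\ phi y \in e [set x; y]).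

Definition K3_adj : rel 'I_3 := fun x y => x != y.

Definition good_coloring (V : finType) (adj : rel V) (n k : nat) : Prop :=
  exists col : {set 'I_n} -> 'I_k,
    forall i : 'I_k, ~ contains_berge adj (fun e => col e == i).

Definition f_is (V : finType) (adj : rel V) (n m : nat) : Prop :=
  good_coloring adj n m /\ (forall k, good_coloring adj n k -> m <= k).

(* Main.v *)
Require Import Defs.
From mathcomp Require Import all_boot.
From mathcomp Require Import zify.
Set Implicit Arguments. Unset Strict Implicit. Unset Printing Implicit Defensive.

Lemma card_setT (T : finType) : #|{set T}| = 2 ^ #|T|.
Proof. by rewrite -(cardsT T) -card_powerset powersetT cardsT. Qed.

Lemma other1 (T : finType) (S : {set T}) a : 1 < #|S| -> exists b, b \in S /\ b != a.
Proof.
move=> h; have : 0 < #|S :\ a|.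
  by move: h; rewrite (cardsD1 a S); case: (a \in S) => /=; lia.
case/card_gt0P => b; rewrite !inE => /andP[ba bS]; by exists b.
Qed.

Lemma other2 (T : finType) (S : {set T}) a b : 2 < #|S| ->
  exists c, [/\ c \in S, c != a & c != b].
Proof.
move=> h; have : 0 < #|S :\ a :\ b|.
  move: h; rewrite (cardsD1 a S) (cardsD1 b (S :\ a)).
  by case: (a \in S); case: (b \in S :\ a) => /=; lia.
case/card_gt0P => c; rewrite !inE => /and3P[cb ca cS]; by exists c.
Qed.

Lemma hall2 (T : finType) (X Y : {set T}) x0 y0 :
  x0 \in X -> y0 \in Y -> (forall a, exists b, b \in X :|: Y /\ b != a) ->
  exists x y, [/\ x \in X, y \in Y & x != y].
Proof.
move=> hx hy hU; case: (eqVneq x0 y0) => [e|ne]; last by exists x0, y0.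
subst y0; case: (hU x0) => b []; rewrite inE => /orP[bX|bY] nb.
  by exists b, x0.
by exists x0, b; rewrite eq_sym.
Qed.

Lemma hall3 (T : finType) (X Y Z : {set T}) :
  0 < #|X| -> 0 < #|Y| -> 0 < #|Z| ->
  1 < #|X :|: Y| -> 1 < #|X :|: Z| -> 1 < #|Y :|: Z| -> 2 < #|X :|: Y :|: Z| ->
  exists x y z, [/\ x \in X, y \in Y, z \in Z & [/\ x != y, y != z & x != z]].
Proof.
move=> /card_gt0P[x0 hx0] /card_gt0P[y0 hy0] /card_gt0P[z0 hz0] hXY hXZ hYZ hW.
case: (boolP [exists z, (z \in Z) && (z \notin X :|: Y)]).
  case/existsP => z /andP[zZ]; rewrite inE negb_or => /andP[zX zY].
  have [x [y [xX yY xy]]] := hall2 hx0 hy0 (fun a => other1 a hXY).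
  exists x, y, z; split => //; split => //.
    by apply: contraNneq zY => <-.
  by apply: contraNneq zX => <-.
rewrite negb_exists => /forallP hZ.
have ZXY : forall z, z \in Z -> z \in X :|: Y.
  by move=> z zZ; move: (hZ z); rewrite zZ /= negbK.
suff [z [zZ [x [xX xz]] [y [yY yz]]]] :
  exists z, [/\ z \in Z, exists x, x \in X /\ x != z & exists y, y \in Y /\ y != z].
  have hx : x \in X :\ z by rewrite !inE xz.
  have hy : y \in Y :\ z by rewrite !inE yz.
  have hU : forall a, exists b, b \in (X :\ z) :|: (Y :\ z) /\ b != a.
    move=> a; have [c [cW ca cz]] := other2 a z hW.
    exists c; split => //; rewrite !inE cz /=.
    move: cW; rewrite !inE => /orP[/orP[->|->]|cZ] //; first by rewrite orbT.
    by have := ZXY c cZ; rewrite inE.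
  have [x1 [y1 [x1X y1Y xy]]] := hall2 hx hy hU.
  move: x1X y1Y; rewrite !inE => /andP[x1z x1X] /andP[y1z y1Y].
  by exists x1, y1, z; split => //; split => //; rewrite eq_sym.
case: (boolP [exists x, (x \in X) && (x != z0)]) => [/existsP[x /andP[xX xz]]|].
  case: (boolP [exists y, (y \in Y) && (y != z0)]) => [/existsP[y /andP[yY yz]]|].
    by exists z0; split => //; [exists x | exists y].
  rewrite negb_exists => /forallP hY.
  have Yz : forall y, y \in Y -> y = z0.
    by move=> y yY; move: (hY y); rewrite yY /= negbK => /eqP.
  have [z1 [z1YZ z1z]] := other1 z0 hYZ.
  have z1Z : z1 \in Z.
    by move: z1YZ; rewrite inE => /orP[/Yz e|//]; rewrite e eqxx in z1z.
  exists z1; split => //.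
    have [c [cW cz0 cz1]] := other2 z0 z1 hW.
    have cXY : c \in X :|: Y.
      by move: cW; rewrite inE => /orP[//|/ZXY].
    move: cXY; rewrite inE => /orP[cX|/Yz e]; last by rewrite e eqxx in cz0.
    by exists c.
  by exists y0; split => //; rewrite (Yz _ hy0) eq_sym.
rewrite negb_exists => /forallP hX.
have Xz : forall x, x \in X -> x = z0.
  by move=> x xX; move: (hX x); rewrite xX /= negbK => /eqP.
have [z1 [z1XZ z1z]] := other1 z0 hXZ.
have z1Z : z1 \in Z.
  by move: z1XZ; rewrite inE => /orP[/Xz e|//]; rewrite e eqxx in z1z.
exists z1; split => //.
  by exists x0; split => //; rewrite (Xz _ hx0) eq_sym.
have [c [cW cz0 cz1]] := other2 z0 z1 hW.
have cXY : c \in X :|: Y.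
  by move: cW; rewrite inE => /orP[//|/ZXY].
move: cXY; rewrite inE => /orP[/Xz e|cY]; first by rewrite e eqxx in cz0.
by exists c.
Qed.

Lemma card_le n (S : {set 'I_n}) : #|S| <= n.
Proof. by rewrite -[X in _ <= X]card_ord max_card. Qed.

Lemma union_big n h (B C : {set 'I_n}) : B != C -> h < #|B| -> h < #|C| ->
  h.+1 < #|B :|: C|.
Proof.
move=> BC hB hC; rewrite ltnNge; apply/negP => hU.
have e1 : B == B :|: C by rewrite eqEcard subsetUl; apply: leq_trans hU hB.
have e2 : C == B :|: C by rewrite eqEcard subsetUr; apply: leq_trans hU hC.
by move: BC; rewrite (eqP e1) -(eqP e2) eqxx.
Qed.

Lemma three_sets n h (A B C : {set 'I_n}) : n = h.*2.+1 -> 3 <= h ->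
  h < #|A| -> h < #|B| -> h < #|C| -> A != B -> B != C -> A != C ->
  exists x y z, [/\ x \in A :&: C, y \in A :&: B, z \in B :&: C &
                   [/\ x != y, y != z & x != z]].
Proof.
move=> hn h3 hA hB hC AB BC AC.
have cle := @card_le n.
have i2 : forall P Q : {set 'I_n}, h < #|P| -> h < #|Q| -> 0 < #|P :&: Q|.
  move=> P Q hP hQ; have := cardsUI P Q; have := cle (P :|: Q); lia.
have u3 : forall P Q R : {set 'I_n}, Q != R -> h < #|P| -> h < #|Q| -> h < #|R| ->
    1 < #|(P :&: Q) :|: (P :&: R)|.
  move=> P Q R QR hP hQ hR; rewrite -setIUr.
  have := cardsUI P (Q :|: R); have := cle (P :|: (Q :|: R));
  have := union_big QR hQ hR; lia.
apply: hall3.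
- exact: i2.
- exact: i2.
- exact: i2.
- apply: u3 => //; by rewrite eq_sym.
- rewrite (setIC A C) (setIC B C); exact: u3.
- rewrite (setIC A B); exact: u3.
set W := _ :|: _ :|: _.
have s1 : A :&: B \subset W.
  by apply/subsetP => u; rewrite !inE; case: (u \in A); case: (u \in B); case: (u \in C).
have s2 : (A :|: B) :&: C \subset W.
  by apply/subsetP => u; rewrite !inE; case: (u \in A); case: (u \in B); case: (u \in C).
have := subset_leq_card s1; have := subset_leq_card s2.
have := cardsUI A B; have := cardsUI (A :|: B) C; have := cle (A :|: B :|: C).
have := cardsUI A B.
lia.
Qed.

Definition o0 : 'I_3 := @Ordinal 3 0 isT.
Definition o1 : 'I_3 := @Ordinal 3 1 isT.
Definition o2 : 'I_3 := @Ordinal 3 2 isT.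

Lemma ord3_cases (x : 'I_3) : [\/ x = o0, x = o1 | x = o2].
Proof.
case: x => [[|[|[|k]]] Hk].
- by apply: Or31; apply: val_inj.
- by apply: Or32; apply: val_inj.
- by apply: Or33; apply: val_inj.
- by [].
Qed.

Definition P01 := [set o0; o1].
Definition P12 := [set o1; o2].
Definition P02 := [set o0; o2].

Lemma P01_12 : (P01 == P12) = false.
Proof. by apply/eqP => /setP/(_ o0); rewrite !inE. Qed.
Lemma P01_02 : (P02 == P01) = false.
Proof. by apply/eqP => /setP/(_ o2); rewrite !inE. Qed.
Lemma P12_02 : (P02 == P12) = false.
Proof. by apply/eqP => /setP/(_ o0); rewrite !inE. Qed.

Lemma pair_cases (x y : 'I_3) : x != y ->
  [\/ [set x; y] = P01, [set x; y] = P12 | [set x; y] = P02].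
Proof.
rewrite /P01 /P12 /P02.
case: (ord3_cases x) => ->; case: (ord3_cases y) => -> //= _.
all: first [by apply: Or31 | by apply: Or32 | by apply: Or33
  | by apply: Or31; rewrite setUC | by apply: Or32; rewrite setUC | by apply: Or33; rewrite setUC].
Qed.

Lemma P12_01 : (P12 == P01) = false. Proof. by rewrite eq_sym P01_12. Qed.
Lemma P01_02' : (P01 == P02) = false. Proof. by rewrite eq_sym P01_02. Qed.
Lemma P12_02' : (P12 == P02) = false. Proof. by rewrite eq_sym P12_02. Qed.

Lemma berge_of n (H : pred {set 'I_n}) A B C x y z :
  A != B -> B != C -> A != C -> H A -> H B -> H C ->
  x \in A :&: C -> y \in A :&: B -> z \in B :&: C -> x != y -> y != z -> x != z ->
  contains_berge K3_adj H.
Proof.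
move=> AB BC AC HA HB HC; rewrite !inE => /andP[xA xC] /andP[yA yB] /andP[zB zC] xy yz xz.
exists (fun i => if i == o0 then x else if i == o1 then y else z).
exists (fun p => if p == P01 then A else if p == P12 then B else C).
split; [|split].
- move=> i j; case: (ord3_cases i) => ->; case: (ord3_cases j) => -> //=;
  by move=> e; move: xy yz xz; rewrite e !eqxx.
- move=> p q /existsP[a /existsP[b /andP[ab /eqP ->]]]
    /existsP[c /existsP[d /andP[cd /eqP ->]]].
  case: (pair_cases ab) => ->; case: (pair_cases cd) => -> //;
  rewrite ?eqxx ?P01_12 ?P12_01 ?P01_02 ?P01_02' ?P12_02 ?P12_02' /= => e;
  by move: AB BC AC; rewrite e eqxx.
- move=> a b ab.
  have ha : a \in [set a; b] by rewrite !inE eqxx.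
  have hb : b \in [set a; b] by rewrite !inE eqxx orbT.
  case: (pair_cases ab) => E; rewrite E in ha hb *;
  rewrite ?eqxx ?P01_12 ?P12_01 ?P01_02 ?P01_02' ?P12_02 ?P12_02' /=;
  move: ha hb; rewrite !inE;
  (split; [done|]);
  by case/orP: ha => /eqP ->; case/orP: hb => /eqP -> /=.
Qed.

Section Upper.
Variable m : nat.
Definition oo : 'I_(m.+2) := ord0.
Definition o1' : 'I_(m.+2) := @Ordinal (m.+2) 1 isT.
Definition prime_ (S : {set 'I_(m.+2)}) := if oo \in S then ~: S else S.
Definition key (S : {set 'I_(m.+2)}) : {set 'I_m} := [set j | rshift 2 j \in prime_ S].
Lemma ecard : #|{set 'I_m}| = 2 ^ m. Proof. by rewrite card_setT card_ord. Qed.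
Definition ucol (S : {set 'I_(m.+2)}) : 'I_(2 ^ m) := cast_ord ecard (enum_rank (key S)).

Lemma decomp (u : 'I_(m.+2)) : [\/ u = oo, u = o1' | exists j : 'I_m, u = rshift 2 j].
Proof.
case: u => [[|[|k]] Hk].
- by apply: Or31; apply: val_inj.
- by apply: Or32; apply: val_inj.
- by apply: Or33; exists (@Ordinal m k Hk); apply: val_inj.
Qed.

Lemma oo_prime S : oo \notin prime_ S.
Proof. by rewrite /prime_; case: ifP => h; rewrite ?inE h. Qed.

Lemma bad2 S T w : key S = key T -> (o1' \in prime_ S) = (o1' \in prime_ T) ->
  w \in S -> w \in T -> S = T.
Proof.
move=> kST h1 wS wT.
have pe : prime_ S = prime_ T.
  apply/setP => u; case: (decomp u) => [->|->|[j ->]].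
  - by rewrite (negbTE (oo_prime S)) (negbTE (oo_prime T)).
  - exact: h1.
  - by move/setP: kST => /(_ j); rewrite !inE.
move: pe; rewrite /prime_; case: ifP => hS; case: ifP => hT.
- by move/setC_inj.
- by move=> e; move: wT; rewrite -e inE wS.
- by move=> e; move: wS; rewrite e inE wT.
- by [].
Qed.

Lemma ucol_key S T : ucol S = ucol T -> key S = key T.
Proof. by move/cast_ord_inj/enum_rank_inj. Qed.

Lemma edge01 : graph_edge K3_adj P01.
Proof. by apply/existsP; exists o0; apply/existsP; exists o1; rewrite /P01 eqxx. Qed.
Lemma edge12 : graph_edge K3_adj P12.
Proof. by apply/existsP; exists o1; apply/existsP; exists o2; rewrite ?/P12 ?/P02 eqxx. Qed.
Lemma edge02 : graph_edge K3_adj P02.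
Proof. by apply/existsP; exists o0; apply/existsP; exists o2; rewrite ?/P12 ?/P02 eqxx. Qed.

Lemma upper_good : good_coloring K3_adj m.+2 (2 ^ m).
Proof.
exists ucol => i [phi [e [_ [edist cond]]]].
have [H01 [a01 b01]] := cond o0 o1 isT.
have [H12 [a12 b12]] := cond o1 o2 isT.
have [H02 [a02 b02]] := cond o0 o2 isT.
rewrite -/P01 in H01 a01 b01; rewrite -/P12 in H12 a12 b12; rewrite -/P02 in H02 a02 b02.
have d1 : e P01 <> e P12 by move/(edist _ _ edge01 edge12)/eqP; rewrite P01_12.
have d2 : e P01 <> e P02 by move/(edist _ _ edge01 edge02)/eqP; rewrite P01_02'.
have d3 : e P12 <> e P02 by move/(edist _ _ edge12 edge02)/eqP; rewrite P12_02'.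
have k1 : key (e P01) = key (e P12) by apply: ucol_key; rewrite (eqP H01) (eqP H12).
have k2 : key (e P01) = key (e P02) by apply: ucol_key; rewrite (eqP H01) (eqP H02).
have k3 : key (e P12) = key (e P02) by apply: ucol_key; rewrite (eqP H12) (eqP H02).
case b1: (o1' \in prime_ (e P01)); case b2: (o1' \in prime_ (e P12));
  case b3: (o1' \in prime_ (e P02));
  first [ by apply: d1; apply: (bad2 k1 _ b01 a12); rewrite b1 b2
        | by apply: d2; apply: (bad2 k2 _ a01 a02); rewrite b1 b3
        | by apply: d3; apply: (bad2 k3 _ b12 b02); rewrite b2 b3 ].
Qed.
End Upper.

Lemma lower_gen n h k : n = h.*2.+1 -> 3 <= h -> good_coloring K3_adj n k -> 2 ^ (n - 2) <= k.
Proof.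
move=> hn h3 [col Hcol].
set L := [set S : {set 'I_n} | h < #|S|].
have hn' : n = (h + h).+1 by rewrite addnn.
have cardL : #|L| * 2 = 2 ^ n.
  have e : ~: L = (@setC _) @^-1: L.
    apply/setP => S; rewrite !inE.
    have := cardsC S; rewrite card_ord => hc.
    case: (leqP #|S| h) => hS /=; symmetry.
      change (h < #|~: S|); move: hc hS; move: (#|~: S|) (#|S|) => c s; clear -hn'; lia.
    apply/negbTE; rewrite -leqNgt.
    move: hc hS; move: (#|~: S|) (#|S|) => c s; clear -hn'; lia.
  have := cardsC L; rewrite ecard e card_preimset; last exact: setC_inj.
  move: (#|L|) => l; clear; lia.
have fib : forall i, #|[set S in L | col S == i]| <= 2.
  move=> i; rewrite leqNgt; apply/negP => hF.
  have /card_gt0P [A AF] : 0 < #|[set S in L | col S == i]| by apply: leq_trans hF.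
  have [B [BF BA]] := other1 A (ltnW hF).
  have [C [CF CA CB]] := other2 A B hF.
  move: AF BF CF; rewrite !inE => /andP[hA cA] /andP[hB cB] /andP[hC cC].
  have [x [y [z [hx hy hz [xy yz xz]]]]] :=
    three_sets hn h3 hA hB hC (negbT (introF eqP (fun e => (negP BA) (introT eqP (esym e)))))
      (negbT (introF eqP (fun e => (negP CB) (introT eqP (esym e))))) (negbT (introF eqP (fun e => (negP CA) (introT eqP (esym e))))).
  apply: (Hcol i).
  apply: (berge_of (H := fun e => col e == i)) hx hy hz xy yz xz => //.
  + by rewrite eq_sym.
  + by rewrite eq_sym.
  + by rewrite eq_sym.
have sum : #|L| <= 2 * k.
  rewrite -sum1_card (partition_big col predT) //=.
  apply: (@leq_trans (\sum_(j < k) 2)).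
    apply: leq_sum => j _; rewrite sum1dep_card; exact: fib.
  by rewrite big_const_ord iter_addn_0 mulnC.
have e4 : 2 ^ n = 2 ^ (n - 2) * 4.
  rewrite -[4]/(2 ^ 2) -expnD subnK //; clear -hn' h3; lia.
move: cardL sum e4; move: (#|L|) (2 ^ n) (2 ^ (n - 2)) => l a b; clear; lia.
Qed.

Lemma lower3 k : good_coloring K3_adj 3 k -> 2 <= k.
Proof.
move=> [col Hcol].
case: k col Hcol => [|[|k]] col Hcol //.
  by case: (col set0).
have e1 : forall u v : 'I_1, u = v.
  by move=> [[|?] ?] [[|?] ?] //; apply: val_inj.
exfalso; apply: (Hcol (col P01)).
apply: (berge_of (H := fun e => col e == col P01)
   (A := P01) (B := P12) (C := P02) (x := o0) (y := o1) (z := o2)).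
all: rewrite ?P01_12 ?P01_02' ?P12_02' ?(e1 (col _) (col P01)) ?eqxx //.
all: by rewrite !inE.
Qed.

Theorem theorem1 (n : nat) :
  odd n -> 3 <= n -> n != 5 -> f_is K3_adj n (2 ^ (n - 2)).
Proof.
move=> hodd h3 h5; split.
  case: n hodd h3 h5 => [|[|m]] // _ _ _.
  by rewrite !subSS ?subn0; exact: upper_good.
move=> k hk.
have hn : n = (n./2).*2.+1 by rewrite -[LHS](odd_double_half n) hodd.
case: (ltnP 2 n./2) => hh.
  exact: lower_gen hn hh hk.
have n3 : n = 3.
  move: hn h3 h5 hh; move: (n./2) => h; rewrite -addnn; lia.
by subst n; exact: lower3.
Qed.
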